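(* Let $M\ge 2$ be even, $T\ge 1$, $\mathcal{X}=\{\pm1,\pm3,\ldots,\pm(M-1)\}$ and $\mathcal{C}=\mathcal{X}^T\subset\mathbb{R}^T$. Let $\mathbf{y}\in\mathbb{R}^T$, $\mathbf{y}\neq\mathbf 0$. Let $\mathbf{x}^{\mathrm{opt}}$ be any maximizer of $(\hat{\mathbf{x}}'\mathbf{y})^2/\|\hat{\mathbf{x}}\|^2$ over $\hat{\mathbf{x}}\in\mathcal{C}$, let $h^{\mathrm{opt}}=(\mathbf{x}^{\mathrm{opt}})'\mathbf{y}/\|\mathbf{x}^{\mathrm{opt}}\|^2$ and $\lambda^{\mathrm{opt}}=1/h^{\mathrm{opt}}$. Then $|\lambda^{\mathrm{opt}}y_t|\le M+T-2$ for all $t=1,\ldots,T$.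
   Context: $(\cdot)'$ denotes transpose and $\|\cdot\|$ the Euclidean norm. This is noncoherent GLRT detection of $M$-ary PAM codewords of length $T$ over a real-valued block fading channel $\mathbf{y}=h\mathbf{x}+\mathbf{n}$; since $\mathbf{y}\ne\mathbf 0$ the maximum is positive so $h^{\mathrm{opt}}\neq0$. *)

(* Defs.v *)
From HB Require Import structures.
From mathcomp Require Import all_boot all_order all_algebra.
Set Implicit Arguments. Unset Strict Implicit. Unset Printing Implicit Defensive.
Import Order.TTheory GRing.Theory Num.Theory.
Local Open Scope ring_scope.

(* M-ary PAM alphabet {±1, ±3, ..., ±(M-1)} = { 2k+1-M : k < M } (M even). *)
Definition pam (R : nzRingType) (M : nat) (a : R) : Prop :=
  exists k : nat, (k < M)%N /\ a = (2 * k + 1)%:R - M%:R.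

Definition codeword (R : nzRingType) (M T : nat) (x : 'I_T -> R) : Prop :=
  forall t, pam M (x t).

Definition dotv (R : nzRingType) (T : nat) (x y : 'I_T -> R) : R :=
  \sum_(t < T) x t * y t.
Definition sqnorm (R : nzRingType) (T : nat) (x : 'I_T -> R) : R := dotv x x.

Definition glrt_metric (R : fieldType) (T : nat) (x y : 'I_T -> R) : R :=
  dotv x y ^+ 2 / sqnorm x.

(* Main.v *)
Require Import Defs.
From HB Require Import structures.
From mathcomp Require Import all_boot all_order all_algebra.
From Stdlib Require Import Ring Lia.
Import Order.TTheory GRing.Theory Num.Theory.
Local Open Scope ring_scope.

Section Alg.
Variable R : realFieldType.
Definition Rc := GRing.PzSemiRing.sort (Num_RealField__to__GRing_PzSemiRing R).
Lemma RT : @ring_theory (GRing.PzSemiRing.sort (Num_RealField__to__GRing_PzSemiRing R)) (@Algebra.zero (Num_RealField__to__Algebra_BaseAddUMagma R)) (GRing.one (Num_RealField__to__GRing_PzSemiRing R))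
  (@Algebra.add (Num_RealField__to__Algebra_BaseAddMagma R)) (@GRing.mul (Num_RealField__to__GRing_PzSemiRing R))
  (fun x y => @Algebra.add (Num_RealField__to__Algebra_BaseAddMagma R) x (@Algebra.opp (Num_RealField__to__Algebra_BaseZmodule R) y))
  (@Algebra.opp (Num_RealField__to__Algebra_BaseZmodule R)) (@eq (GRing.PzSemiRing.sort (Num_RealField__to__GRing_PzSemiRing R))).
Proof. split=> //; [exact: add0r|exact: addrC|exact: addrA|exact: mul1r|exact: mulrC|exact: mulrA|exact: mulrDl|move=>x; exact: subrr]. Qed.
Add Ring Rring : RT.
Lemma RT0 : @ring_theory (Algebra.BaseAddMagma.sort (Num_RealField__to__Algebra_BaseAddMagma R)) (@Algebra.zero (Num_RealField__to__Algebra_BaseAddUMagma R)) (GRing.one (Num_RealField__to__GRing_PzSemiRing R))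
  (@Algebra.add (Num_RealField__to__Algebra_BaseAddMagma R)) (@GRing.mul (Num_RealField__to__GRing_PzSemiRing R))
  (fun x y => @Algebra.add (Num_RealField__to__Algebra_BaseAddMagma R) x (@Algebra.opp (Num_RealField__to__Algebra_BaseZmodule R) y))
  (@Algebra.opp (Num_RealField__to__Algebra_BaseZmodule R)) (@eq (Algebra.BaseAddMagma.sort (Num_RealField__to__Algebra_BaseAddMagma R))).
Proof. exact: RT. Qed.
Add Ring Rring0 : RT0.
Lemma RT1 : @ring_theory (Algebra.BaseZmodule.sort (Num_RealField__to__Algebra_BaseZmodule R)) (@Algebra.zero (Num_RealField__to__Algebra_BaseAddUMagma R)) (GRing.one (Num_RealField__to__GRing_PzSemiRing R))
  (@Algebra.add (Num_RealField__to__Algebra_BaseAddMagma R)) (@GRing.mul (Num_RealField__to__GRing_PzSemiRing R))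
  (fun x y => @Algebra.add (Num_RealField__to__Algebra_BaseAddMagma R) x (@Algebra.opp (Num_RealField__to__Algebra_BaseZmodule R) y))
  (@Algebra.opp (Num_RealField__to__Algebra_BaseZmodule R)) (@eq (Algebra.BaseZmodule.sort (Num_RealField__to__Algebra_BaseZmodule R))).
Proof. exact: RT. Qed.
Add Ring Rring1 : RT1.
Lemma RT2 : @ring_theory (Algebra.BaseAddUMagma.sort (Num_RealField__to__Algebra_BaseAddUMagma R)) (@Algebra.zero (Num_RealField__to__Algebra_BaseAddUMagma R)) (GRing.one (Num_RealField__to__GRing_PzSemiRing R))
  (@Algebra.add (Num_RealField__to__Algebra_BaseAddMagma R)) (@GRing.mul (Num_RealField__to__GRing_PzSemiRing R))
  (fun x y => @Algebra.add (Num_RealField__to__Algebra_BaseAddMagma R) x (@Algebra.opp (Num_RealField__to__Algebra_BaseZmodule R) y))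
  (@Algebra.opp (Num_RealField__to__Algebra_BaseZmodule R)) (@eq (Algebra.BaseAddUMagma.sort (Num_RealField__to__Algebra_BaseAddUMagma R))).
Proof. exact: RT. Qed.
Add Ring Rring2 : RT2.
Lemma RT3 : @ring_theory (Num.RealField.sort R) (@Algebra.zero (Num_RealField__to__Algebra_BaseAddUMagma R)) (GRing.one (Num_RealField__to__GRing_PzSemiRing R))
  (@Algebra.add (Num_RealField__to__Algebra_BaseAddMagma R)) (@GRing.mul (Num_RealField__to__GRing_PzSemiRing R))
  (fun x y => @Algebra.add (Num_RealField__to__Algebra_BaseAddMagma R) x (@Algebra.opp (Num_RealField__to__Algebra_BaseZmodule R) y))
  (@Algebra.opp (Num_RealField__to__Algebra_BaseZmodule R)) (@eq (Num.RealField.sort R)).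
Proof. exact: RT. Qed.
Add Ring Rring3 : RT3.
Ltac normR :=
 repeat (match goal with
 | |- context [@Algebra.add ?i ?a ?b] => assert_fails (constr_eq i (Num_RealField__to__Algebra_BaseAddMagma R)); change (@Algebra.add i a b) with (@Algebra.add (Num_RealField__to__Algebra_BaseAddMagma R) a b)
 | |- context [@GRing.mul ?i ?a ?b] => assert_fails (constr_eq i (Num_RealField__to__GRing_PzSemiRing R)); change (@GRing.mul i a b) with (@GRing.mul (Num_RealField__to__GRing_PzSemiRing R) a b)
 | |- context [@Algebra.opp ?i ?a] => assert_fails (constr_eq i (Num_RealField__to__Algebra_BaseZmodule R)); change (@Algebra.opp i a) with (@Algebra.opp (Num_RealField__to__Algebra_BaseZmodule R) a)
 | |- context [@Algebra.zero ?i] => assert_fails (constr_eq i (Num_RealField__to__Algebra_BaseAddUMagma R)); change (@Algebra.zero i) with (@Algebra.zero (Num_RealField__to__Algebra_BaseAddUMagma R))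
 | |- context [GRing.one ?i] => assert_fails (constr_eq i (Num_RealField__to__GRing_PzSemiRing R)); change (GRing.one i) with (GRing.one (Num_RealField__to__GRing_PzSemiRing R))
 | |- context [@Algebra.natmul ?i ?o ?n] => assert_fails (constr_eq i (Num_RealField__to__Algebra_BaseAddUMagma R)); change (@Algebra.natmul i o n) with (@Algebra.natmul (Num_RealField__to__Algebra_BaseAddUMagma R) o n)
 | |- @eq ?T ?a ?b => let U := type of a in assert_fails (constr_eq T U); change (@eq U a b)
 end).
Ltac rring := rewrite ?mulr1n; normR; ring.

Lemma pam_eq M (a : R) : pam M a -> exists2 k, (k < M)%N & a = (2 * k + 1)%:R - M%:R.
Proof. by case=> k [h ->]; exists k. Qed.

Lemma pamN M (a : R) : pam M a -> pam M (- a).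
Proof.
case=> k [hk ->]; exists (M - 1 - k)%N; split.
  by rewrite -subnDA ltn_subrL; apply/andP; split => //; case: M hk.
have e : (2 * (M - 1 - k) + 1 = (M + M) - (2 * k + 1))%N.
  by move/ssrnat.ltP: hk => hk; rewrite -?plusE -?minusE -?multE; lia.
rewrite e natrB; last by move/ssrnat.ltP: hk => hk; apply/ssrnat.leP; rewrite -?plusE -?minusE -?multE; lia.
rewrite !natrD. rring.
Qed.

Lemma pam_ne0 M (a : R) : ~~ odd M -> pam M a -> a != 0.
Proof.
move=> hM [k [hk ->]]; rewrite subr_eq0 eqr_nat; apply/eqP=> e.
by move: hM; rewrite -e addn1 /= oddM.
Qed.

Ltac nlia := unfold addn, addn_rec, subn, subn_rec, muln, muln_rec in *; lia.

Lemma pam_le M (a : R) : pam M a -> a <= M%:R - 1 /\ - (M%:R - 1) <= a.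
Proof.
case=> k [hk ->]; move/ssrnat.ltP: hk => hk; split; rewrite -subr_ge0.
  have -> : M%:R - 1 - ((2 * k + 1)%:R - M%:R) = ((M + M) - (2 * k + 1 + 1))%:R :> R.
    by rewrite natrB; [rewrite !natrD; rring | apply/ssrnat.leP; nlia].
  exact: ler0n.
have -> : (2 * k + 1)%:R - M%:R - - (M%:R - 1) = (2 * k)%:R :> R.
  by rewrite !natrD; rring.
exact: ler0n.
Qed.

Definition locopt M (x z : R) := forall a, pam M a -> (x - a) * (x + a - (z + z)) <= 0.

Lemma two_gt0 : 0 < 1 + 1 :> R.
Proof. by apply: addr_gt0; apply: ltr01. Qed.

Lemma scalA M (x z : R) : (2 <= M)%N -> ~~ odd M -> pam M x -> locopt M x z ->
  x * x - (M%:R - 1) <= x * z.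
Proof.
move=> hM2 hMe hx hopt; have [hxu hxl] := @pam_le M x hx.
case: hx => k [hk hx].
have hne : (2 * k + 1 != M)%N.
  by apply/eqP=> e; move: hMe; rewrite -e addn1 /= oddM.
case: (ltngtP M (2 * k + 1)) => hc; last by rewrite hc eqxx in hne.
-
  have xpos : 0 < x by rewrite hx subr_gt0 ltr_nat.
  have pa : pam M (x - (1 + 1)).
    exists (k - 1)%N; split; first by move/ssrnat.ltP: hk => hk; apply/ssrnat.ltP; nlia.
    have e : (2 * k + 1 = (2 * (k - 1) + 1) + 1 + 1)%N.
      by move/ssrnat.ltP: hc => hc'; move/ssrnat.leP: hM2 => h2; nlia.
    by rewrite hx e !natrD; rring.
  have h := hopt _ pa.
  have e2 : (x - (x - (1 + 1))) * (x + (x - (1 + 1)) - (z + z)) = (1 + 1) * ((1 + 1) * (x - 1 - z)).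
    by rring.
  rewrite e2 !(pmulr_rle0 _ two_gt0) in h.
  rewrite -subr_ge0.
  have -> : x * z - (x * x - (M%:R - 1)) = x * (z - (x - 1)) + ((M%:R - 1) - x) by rring.
  apply: addr_ge0; last by rewrite subr_ge0.
  apply: mulr_ge0; first exact: ltW.
  by rewrite subr_ge0 -subr_le0.
-
  have xneg : x < 0 by rewrite hx subr_lt0 ltr_nat.
  have pa : pam M (x + (1 + 1)).
    exists (k + 1)%N; split.
      by move/ssrnat.ltP: hc => hc'; apply/ssrnat.ltP; nlia.
    have e : (2 * (k + 1) + 1 = (2 * k + 1) + 1 + 1)%N by nlia.
    by rewrite hx e !natrD; rring.
  have h := hopt _ pa.
  have e2 : (x - (x + (1 + 1))) * (x + (x + (1 + 1)) - (z + z)) = (1 + 1) * ((1 + 1) * (z - x - 1)).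
    by rring.
  rewrite e2 !(pmulr_rle0 _ two_gt0) in h.
  rewrite -subr_ge0.
  have -> : x * z - (x * x - (M%:R - 1)) = (- x) * (x + 1 - z) + ((M%:R - 1) + x) by rring.
  apply: addr_ge0; last first.
    have h2 : 0 <= x - - (M%:R - 1) by rewrite subr_ge0.
    by rewrite opprK addrC in h2.
  apply: mulr_ge0; first by rewrite oppr_ge0 ltW.
  rewrite -oppr_le0; have -> : - (x + 1 - z) = z - x - 1 by rring.
  exact: h.
Qed.

Lemma scalB M (x z : R) : (2 <= M)%N -> pam M x -> locopt M x z ->
  M%:R - 1 < z -> x = M%:R - 1.
Proof.
move=> hM2 hx hopt hz; have [hxu _] := @pam_le M x hx.
have pa : pam M (M%:R - 1 : R).
  exists (M - 1)%N; split; first by move/ssrnat.leP: hM2 => h2; apply/ssrnat.ltP; nlia.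
  have e : (2 * (M - 1) + 1 = (M + M) - 1)%N by move/ssrnat.leP: hM2 => h2; nlia.
  rewrite e natrB; last by move/ssrnat.leP: hM2 => h2; apply/ssrnat.leP; nlia.
  by rewrite natrD; rring.
have h := hopt _ pa.
move: hxu; rewrite le_eqVlt => /orP [/eqP // | hlt].
have hn : x - (M%:R - 1) < 0 by rewrite subr_lt0.
rewrite (nmulr_rle0 _ hn) in h.
have : x + (M%:R - 1) - (z + z) < 0.
  have -> : x + (M%:R - 1) - (z + z) = (x - z) + ((M%:R - 1) - z) by rring.
  apply: ltr_wnDl; last by rewrite subr_lt0.
  by rewrite subr_le0; apply: ltW; apply: lt_trans hz.
by rewrite ltNge h.
Qed.

Lemma combo M T (x z : 'I_T -> R) : (2 <= M)%N -> ~~ odd M -> (1 <= T)%N ->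
  (forall t, pam M (x t)) -> (forall t, locopt M (x t) (z t)) ->
  \sum_(t < T) x t * z t = \sum_(t < T) x t * x t ->
  forall s, z s <= M%:R - 1 + (T.-1)%:R.
Proof.
move=> hM2 hMe hT hx hl hs s; rewrite leNgt; apply/negP => hz.
set cM : R := M%:R - 1 in hz *.
have cMpos : 0 < cM.
  rewrite /cM subr_gt0 -[1 : R]/(1%:R) ltr_nat //.
have hz' : cM < z s.
  apply: le_lt_trans hz; rewrite lerDl; exact: ler0n.
have xs : x s = cM by apply: (@scalB M _ _ hM2 (hx s) (hl s) hz').
have hw : forall t, 0 <= x t * z t - x t * x t + cM.
  move=> t; have := @scalA M _ _ hM2 hMe (hx t) (hl t); rewrite -subr_ge0.
  by congr (0 <= _); rewrite /cM; rring.
clearbody cM.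
have eS : \sum_(t < T) (x t * z t - x t * x t + cM) = cM *+ T.
  by rewrite big_split /= sumrB hs subrr add0r sumr_const card_ord.
have hge : x s * z s - x s * x s + cM <= cM *+ T.
  rewrite -eS (bigD1 s) //= lerDl; apply: sumr_ge0 => t _; exact: hw.
have eT : (T%:R : R) = (T.-1)%:R + 1 by rewrite natr1 prednK.
move: hge; rewrite -mulr_natr eT xs -subr_ge0.
have -> : cM * ((T.-1)%:R + 1) - (cM * z s - cM * cM + cM) = - (cM * (z s - (cM + (T.-1)%:R)))
  by rring.
rewrite oppr_ge0 pmulr_rle0 // subr_le0 leNgt.
by rewrite hz.
Qed.

Lemma sq_ge0 (v : R) : 0 <= v * v.
Proof. by rewrite -expr2 sqr_ge0. Qed.

Lemma sq_gt0 (v : R) : v != 0 -> 0 < v * v.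
Proof. by move=> hv; rewrite lt_def mulf_neq0 // sq_ge0. Qed.

Lemma alg1 (d n d' n' h lam e f yv : R) : 0 < n' -> n != 0 -> h * n = d -> lam * h = 1 ->
  d' = d + e * yv -> n' = n + e * f -> d' ^+ 2 / n' <= d ^+ 2 / n ->
  0 <= e * f - e * (lam * yv + lam * yv).
Proof.
move=> hn' hn hhn hlh ed en hle.
have h1 : (h + h) * d' - h * h * n' <= d' ^+ 2 / n'.
  rewrite ler_pdivlMr // -subr_ge0.
  have -> : d' ^+ 2 - ((h + h) * d' - h * h * n') * n' = (d' - h * n') * (d' - h * n')
    by rewrite expr2; rring.
  exact: sq_ge0.
have h2 : d ^+ 2 / n = (h + h) * d - h * h * n.
  have -> : (h + h) * d - h * h * n = (h + h) * d - h * (h * n) by rring.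
  rewrite hhn.
  have -> : d ^+ 2 / n = (d * h) * n / n by rewrite -[d * h * n]mulrA hhn expr2.
  rewrite mulfK //; rring.
have h3 := le_trans h1 hle; rewrite h2 ed en -subr_ge0 in h3.
have -> : e * f - e * (lam * yv + lam * yv) =
   (lam * lam) * ((h + h) * d - h * h * n - ((h + h) * (d + e * yv) - h * h * (n + e * f))).
  have -> : (lam * lam) * ((h + h) * d - h * h * n - ((h + h) * (d + e * yv) - h * h * (n + e * f)))
     = (lam * h) * (lam * h) * (e * f) - (lam * h) * (e * (lam * yv + lam * yv)) by rring.
  rewrite hlh; rring.
by apply: mulr_ge0 => //; exact: sq_ge0.
Qed.

Lemma local_opt M T (x y : 'I_T -> R) : ~~ odd M -> codeword M x ->
  (forall xh, codeword M xh -> glrt_metric xh y <= glrt_metric x y) ->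
  dotv x y != 0 -> 0 < sqnorm x ->
  forall u, locopt M (x u) ((dotv x y / sqnorm x)^-1 * y u).
Proof.
move=> hMe hx hmax hd hn u a ha.
pose x' := fun i => if i == u then a else x i.
have cx' : codeword M x' by move=> i; rewrite /x'; case: (i == u).
have ed : dotv x' y = dotv x y + (a - x u) * y u.
  rewrite /dotv (bigD1 u) //= [in RHS](bigD1 u) //= /x' eqxx.
  have -> : \sum_(i < T | i != u) (if i == u then a else x i) * y i = \sum_(i < T | i != u) x i * y i.
    by apply: eq_bigr => i /negbTE ->.
  move: (\sum_(i < T | i != u) x i * y i) => S; rring.
have en : sqnorm x' = sqnorm x + (a - x u) * (a + x u).
  rewrite /sqnorm /dotv (bigD1 u) //= [in RHS](bigD1 u) //= /x' eqxx.
  have -> : \sum_(i < T | i != u) (if i == u then a else x i) * (if i == u then a else x i) = \sum_(i < T | i != u) x i * x i.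
    by apply: eq_bigr => i /negbTE ->.
  move: (\sum_(i < T | i != u) x i * x i) => S; rring.
have hn' : 0 < sqnorm x'.
  rewrite /sqnorm /dotv (bigD1 u) //= /x' eqxx; apply: ltr_wpDr.
    by apply: sumr_ge0 => i _; exact: sq_ge0.
  by apply: sq_gt0; exact: (@pam_ne0 M a hMe ha).
have hh : dotv x y / sqnorm x != 0 by rewrite mulf_neq0 // invr_neq0 // lt0r_neq0.
have := @alg1 (dotv x y) (sqnorm x) (dotv x' y) (sqnorm x') (dotv x y / sqnorm x)
   ((dotv x y / sqnorm x)^-1) (a - x u) (a + x u) (y u) hn' (lt0r_neq0 hn)
   (divfK (lt0r_neq0 hn) _) (mulVf hh) ed en (hmax _ cx').
move: ((dotv x y / sqnorm x)^-1) => lam h.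
rewrite -oppr_ge0; move: h; congr (0 <= _); rring.
Qed.

Lemma locoptN M (x z : R) : locopt M x z -> locopt M (- x) (- z).
Proof.
move=> h a ha; have := h (- a) (@pamN M _ ha).
by congr (_ <= _); rring.
Qed.
End Alg.

Theorem theorem1 (R : realFieldType) (M T : nat)
  (hM2 : (2 <= M)%N) (hMeven : ~~ odd M) (hT : (1 <= T)%N)
  (y : 'I_T -> R) (hy : exists t, y t != 0)
  (xopt : 'I_T -> R) (hxopt : codeword M xopt)
  (hmax : forall xh : 'I_T -> R, codeword M xh ->
            glrt_metric xh y <= glrt_metric xopt y) :
  let hopt := dotv xopt y / sqnorm xopt in
  let lamopt := hopt^-1 in
  forall t : 'I_T, `|lamopt * y t| <= (M + T - 2)%:R.
Proof.
move=> hopt lamopt t.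
have eB : ((M + T - 2)%:R : R) = M%:R - 1 + (T.-1)%:R.
  have -> : (M + T - 2 = (M - 1) + T.-1)%N.
    by move/ssrnat.leP: hM2 => h2; move/ssrnat.leP: hT => h1; rewrite -subn1; unfold addn, addn_rec, subn, subn_rec, muln, muln_rec in *; lia.
  by rewrite natrD natrB ?mulr1n //; apply: ltnW.
case: (eqVneq (dotv xopt y) 0) => hd.
  by rewrite /lamopt /hopt hd mul0r invr0 mul0r normr0 ler0n.
have hn0 : 0 <= sqnorm xopt by apply: sumr_ge0 => i _; exact: sq_ge0.
case: (eqVneq (sqnorm xopt) 0) => hn.
  by rewrite /lamopt /hopt hn invr0 mulr0 invr0 mul0r normr0 ler0n.
have hnp : 0 < sqnorm xopt by rewrite lt_def hn hn0.
have hl := @local_opt R M T xopt y hMeven hxopt hmax hd hnp.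
have hs : \sum_(i < T) xopt i * (lamopt * y i) = \sum_(i < T) xopt i * xopt i.
  have -> : \sum_(i < T) xopt i * (lamopt * y i) = lamopt * dotv xopt y.
    by rewrite /dotv mulr_sumr; apply: eq_bigr => i _; rewrite mulrCA.
  by rewrite /lamopt /hopt invf_div divfK.
have c1 := @combo R M T xopt (fun i => lamopt * y i) hM2 hMeven hT hxopt hl hs t.
have c2 := @combo R M T (fun i => - xopt i) (fun i => - (lamopt * y i)) hM2 hMeven hT
  (fun i => @pamN R M _ (hxopt i)) (fun i => @locoptN R M _ _ (hl i)) _ t.
rewrite eB ler_norml c1 andbT.
rewrite lerNl; apply: c2.
rewrite (eq_bigr (fun i => xopt i * (lamopt * y i))); last by move=> i _; rewrite mulrNN.
by rewrite hs; apply: eq_bigr => i _; rewrite mulrNN.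
Qed.
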